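(* Let $x_0\in\mathbb{R}^n$, $A\in\mathbb{R}^{n\times n}$, $C\in\mathbb{R}^{1\times n}$ and $\mathbf{y}\in\mathbb{R}[\mathfrak{q},\mathfrak{q}^*]$. If $$w=(Cx_0,\ CAx_0,\ CA^2x_0,\ \ldots)\in\ell_{2+},$$ then there exist $m\in\mathbb{N}$, $\bar x_0\in\mathbb{R}^m$, $\bar A\in\mathbb{R}^{m\times m}$ and $\bar C\in\mathbb{R}^{1\times m}$ such that $$\mathbf{y}w=(\bar C\bar x_0,\ \bar C\bar A\bar x_0,\ \bar C\bar A^2\bar x_0,\ \ldots)\in\ell_{2+}.$$
   Context: $\ell_{2+}$ is the space of square-summable real sequences $(y[0],y[1],\ldots)$. The forward shift is $\mathfrak{q}:(y[0],y[1],\ldots)\mapsto(y[1],y[2],\ldots)$ and its adjoint is $\mathfrak{q}^*:(y[0],y[1],\ldots)\mapsto(0,y[0],y[1],\ldots)$. $\mathbb{R}[\mathfrak{q},\mathfrak{q}^*]=\{\sum_{i=0}^{N-1}\sum_{j=0}^{N-1}\alpha_{ij}(\mathfrak{q}^* )^i\mathfrak{q}^j : N\in\mathbb{N},\ \alpha_{ij}\in\mathbb{R}\}$, operators acting on $\ell_{2+}$. *)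

(* Defs.v *)
From HB Require Import structures.
From mathcomp Require Import all_boot all_order all_algebra.
From mathcomp Require Import all_classical all_reals all_analysis.
Set Implicit Arguments. Unset Strict Implicit. Unset Printing Implicit Defensive.
Import Order.TTheory GRing.Theory Num.Theory.
Local Open Scope ring_scope.

Definition in_l2p (R : realType) (u : nat -> R) : Prop :=
  cvgn (series (fun k => u k ^+ 2 : R^o)).

Definition fshift (R : realType) (u : nat -> R) : nat -> R := fun k => u k.+1.

Definition bshift (R : realType) (u : nat -> R) : nat -> R :=
  fun k => if k is k'.+1 then u k' else 0.

(* the operator sum_{i,j<N} alpha_ij (q^* )^i q^j of R[q,q^*],
   given by N and its coefficient matrix alpha, applied to u *)
Definition qpoly_apply (R : realType) (N : nat) (alpha : 'M[R]_N)
  (u : nat -> R) : nat -> R :=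
  fun k => \sum_(i < N) \sum_(j < N)
             alpha i j * iter i (@bshift R) (iter j (@fshift R) u) k.

Definition lti_output (R : realType) (n : nat) (x0 : 'cV[R]_n)
  (A : 'M[R]_n) (C : 'rV[R]_n) : nat -> R :=
  fun k => (C *m (A ^+ k) *m x0) 0 0.

(* Main.v *)
Require Import Defs.
From HB Require Import structures.
From mathcomp Require Import all_boot all_order all_algebra.
From mathcomp Require Import all_classical all_reals all_analysis.
From mathcomp Require Import lra.
Import Order.TTheory GRing.Theory Num.Theory.
Local Open Scope ring_scope.
Section S.
Variable R : realType.

Definition isL (u : nat -> R) := exists m (x : 'cV[R]_m) (A : 'M[R]_m) (C : 'rV[R]_m),
  u =1 lti_output x A C.

Lemma isL0 : isL (fun _ => 0).
Proof. exists 0%N, 0, 0, 0 => k; by rewrite /lti_output mulmx0 mxE. Qed.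

Lemma isLZ c u : isL u -> isL (fun k => c * u k).
Proof.
case=> m [x [A [C e]]]; exists m, (c *: x), A, C => k.
by rewrite e /lti_output -scalemxAr [RHS]mxE.
Qed.

Lemma isLf u : isL u -> isL (fshift u).
Proof.
case=> m [x [A [C e]]]; exists m, (A *m x), A, C => k.
by rewrite /fshift e /lti_output exprSr -mulmxE !mulmxA.
Qed.

Lemma blk_pow m1 m2 (A1 : 'M[R]_m1) (A2 : 'M[R]_m2) k :
  (block_mx A1 0 0 A2) ^+ k = block_mx (A1 ^+ k) 0 0 (A2 ^+ k).
Proof.
elim: k => [|k IH]; first by rewrite !expr0 -scalar_mx_block.
by rewrite !exprS IH -!mulmxE mulmx_block !mulmx0 !mul0mx !addr0 !add0r.
Qed.

Lemma isLD u v : isL u -> isL v -> isL (fun k => u k + v k).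
Proof.
case=> m1 [x1 [A1 [C1 e1]]]; case=> m2 [x2 [A2 [C2 e2]]].
exists (m1 + m2)%N, (col_mx x1 x2), (block_mx A1 0 0 A2), (row_mx C1 C2) => k.
rewrite e1 e2 /lti_output blk_pow mul_row_block mul_row_col !mulmx0 !addr0 add0r.
by rewrite [RHS]mxE.
Qed.

Lemma isLb u : isL u -> isL (bshift u).
Proof.
case=> m [x [A [C e]]].
pose Ab : 'M[R]_(1 + m) := block_mx 0 0 x A.
pose xb : 'cV[R]_(1 + m) := col_mx 1 0.
have key k : Ab ^+ k.+1 *m xb = col_mx 0 (A ^+ k *m x).
  elim: k => [|k IH].
    by rewrite expr1 expr0 mul1mx /Ab /xb mul_block_col !mul0mx !mulmx0 !addr0 mulmx1.
  rewrite exprS -mulmxE -mulmxA IH /Ab mul_block_col !mulmx0 !mul0mx !addr0 add0r.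
  by rewrite exprS -mulmxE mulmxA.
exists (1 + m)%N, xb, Ab, (row_mx 0 C) => -[|k].
  by rewrite /bshift /lti_output expr0 mulmx1 /xb mul_row_col mul0mx mulmx0 addr0 mxE.
by rewrite /bshift e /lti_output -[in RHS]mulmxA key mul_row_col mul0mx add0r mulmxA.
Qed.
Definition l2b (u : nat -> R) := exists M, forall n, \sum_(0 <= k < n) u k ^+ 2 <= M.

Lemma l2bP u : in_l2p u <-> l2b u.
Proof.
have nd : nondecreasing_seq (series (fun k => u k ^+ 2 : R^o)).
  by apply: nondecreasing_series => n _ _; exact: sqr_ge0.
split.
  move=> cu; exists (limn (series (fun k => u k ^+ 2 : R^o))) => n.
  exact: (nondecreasing_cvgn_le nd cu n).
case=> M HM; apply: nondecreasing_is_cvgn => //.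
by exists M => _ [n _ <-]; exact: HM.
Qed.

Lemma l2b0 : l2b (fun _ => 0).
Proof. by exists 0 => n; rewrite big1 // => k _; rewrite expr0n. Qed.

Lemma l2bM u : l2b u -> 0 <= \sum_(0 <= k < 0) u k ^+ 2 -> True.
Proof. by []. Qed.

Lemma l2bZ c u : l2b u -> l2b (fun k => c * u k).
Proof.
case=> M HM; exists (c ^+ 2 * M) => n.
under eq_bigr do rewrite exprMn.
by rewrite -mulr_sumr ler_wpM2l ?sqr_ge0.
Qed.

Lemma l2bD u v : l2b u -> l2b v -> l2b (fun k => u k + v k).
Proof.
case=> M HM; case=> N HN; exists (2 * M + 2 * N) => n.
apply: (@le_trans _ _ (\sum_(0 <= k < n) (2 * u k ^+ 2 + 2 * v k ^+ 2))).
  apply: ler_sum => k _; have := sqr_ge0 (u k - v k); rewrite sqrrB sqrrD; lra.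
rewrite big_split /= -!mulr_sumr.
have := HM n; have := HN n; lra.
Qed.

Lemma l2bf u : l2b u -> l2b (fshift u).
Proof.
case=> M HM; exists M => n; apply: le_trans (HM n.+1).
rewrite big_nat_recl //= /fshift lerDr; exact: sqr_ge0.
Qed.

Lemma l2bb u : l2b u -> l2b (bshift u).
Proof.
case=> M HM; exists M => -[|n].
  by have := HM 0%N; rewrite !big_geq.
by rewrite big_nat_recl //= expr0n add0r; exact: HM.
Qed.
Definition P (u : nat -> R) := isL u /\ l2b u.

Lemma P_ext u v : u =1 v -> P u -> P v.
Proof.
move=> e [[m [x [A [C e1]]]] [M HM]]; split.
  by exists m, x, A, C => k; rewrite -e e1.
by exists M => n; under eq_bigr do rewrite -e.
Qed.

Lemma P_sum (I : Type) (r : seq I) (F : I -> nat -> R) :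
  (forall i, P (F i)) -> P (fun k => \sum_(i <- r) F i k).
Proof.
move=> HF; elim: r => [|i r IH].
  apply: (@P_ext (fun _ => 0)); last by split; [exact: isL0|exact: l2b0].
  by move=> k; rewrite big_nil.
have [H1 H2] := HF i; case: IH => IH1 IH2.
apply: (@P_ext (fun k => F i k + \sum_(j <- r) F j k)); last by split; [exact: isLD|exact: l2bD].
by move=> k; rewrite big_cons.
Qed.

Lemma P_iterf j u : P u -> P (iter j (@fshift R) u).
Proof. elim: j => [//|j IH] /IH [H1 H2]; split; [exact: isLf|exact: l2bf]. Qed.

Lemma P_iterb j u : P u -> P (iter j (@bshift R) u).
Proof. elim: j => [//|j IH] /IH [H1 H2]; split; [exact: isLb|exact: l2bb]. Qed.
End S.

Theorem lemma1 (R : realType) (n : nat) (x0 : 'cV[R]_n) (A : 'M[R]_n)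
  (C : 'rV[R]_n) (N : nat) (alpha : 'M[R]_N) :
  in_l2p (lti_output x0 A C) ->
  exists (m : nat) (xb : 'cV[R]_m) (Ab : 'M[R]_m) (Cb : 'rV[R]_m),
    qpoly_apply alpha (lti_output x0 A C) = lti_output xb Ab Cb /\
    in_l2p (lti_output xb Ab Cb).
Proof.
move=> /l2bP Hw.
have Pw : P R (lti_output x0 A C) by split => //; exists n, x0, A, C.
have : P R (qpoly_apply alpha (lti_output x0 A C)).
  apply: P_sum => i; apply: P_sum => j.
  have [H1 H2] := @P_iterb R i _ (@P_iterf R j _ Pw).
  by split; [exact: isLZ|exact: l2bZ].
case=> [[m [xb [Ab [Cb e]]]] H2].
have ee : qpoly_apply alpha (lti_output x0 A C) = lti_output xb Ab Cb.
  by apply: funext => k; exact: e.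
exists m, xb, Ab, Cb; split => //.
by apply/l2bP; rewrite -ee.
Qed.
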